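(* Let $A=A_s+A_d\epsilon\in\mathbb{DC}^{m\times n}$ and let $A=U\Sigma V^*$ be a singular value decomposition of $A$, where $U\in\mathbb{DC}^{m\times m}$ and $V\in\mathbb{DC}^{n\times n}$ are unitary dual complex matrices and $$\Sigma=\begin{bmatrix}\Sigma_{1s}&O\\O&O\end{bmatrix}+\begin{bmatrix}\Sigma_{1d}&O\\O&\Sigma_{2d}\end{bmatrix}\epsilon\in\mathbb{D}^{m\times n},$$ with $\Sigma_1=\Sigma_{1s}+\Sigma_{1d}\epsilon=\mathrm{diag}(\mu_1,\dots,\mu_r)$, $\mu_1\ge\dots\ge\mu_r$ positive appreciable dual real numbers, and $\Sigma_{2d}\epsilon=\mathrm{diag}(\mu_{r+1},\dots,\mu_t,0,\dots,0)$ with $\mu_{r+1}\ge\dots\ge\mu_t$ positive infinitesimal dual real numbers, $r\le t\le\min\{m,n\}$. Define $$\Sigma^G=\begin{bmatrix}\Sigma_1^{-1}&O\\O&O\end{bmatrix}=\begin{bmatrix}\Sigma_{1s}^{-1}&O\\O&O\end{bmatrix}-\begin{bmatrix}\Sigma_{1s}^{-2}\Sigma_{1d}&O\\O&O\end{bmatrix}\epsilon\in\mathbb{D}^{n\times m},\qquad A^G=V\Sigma^G U^*.$$ Then $X=A^G$ satisfies the four conditions (1e) $AXA=A_e$, (2) $XAX=X$, (3) $(AX)^*=AX$, (4) $(XA)^*=XA$, and it is the unique $X\in\mathbb{DC}^{n\times m}$ satisfying these four conditions. Moreover, if $A_d=O$ (i.e. $A$ is a complex matrix), then $A^G=A_s^+$,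 the Moore–Penrose inverse of $A_s$.
   Context: A dual number is $a=a_s+a_d\epsilon$ where $\epsilon\neq0$, $\epsilon^2=0$, and $\epsilon$ commutes with real/complex numbers; it is a dual real (resp. dual complex) number if $a_s,a_d$ are real (resp. complex). It is appreciable if $a_s\neq0$ and infinitesimal otherwise. Dual reals are totally ordered by: $a>b$ iff $a_s>b_s$, or $a_s=b_s$ and $a_d>b_d$. For appreciable $\mu$, $\mu^{-1}=\mu_s^{-1}-\mu_s^{-2}\mu_d\epsilon$. A dual complex matrix is $A=A_s+A_d\epsilon$ with $A_s,A_d$ complex matrices; $A^*=A_s^*+A_d^*\epsilon$; $U$ is unitary if $U^*U=UU^*=I$. Every $A\in\mathbb{DC}^{m\times n}$ has a singular value decomposition $A=U\Sigma V^*$ as in the statement, and the diagonal entries $\mu_1,\dots,\mu_t$ (with multiplicities) are unique. The essential part of $A$ is $A_e=U\begin{bmatrix}\Sigma_1&O\\O&O\end{bmatrix}V^*$ (with $\Sigma_1=\mathrm{diag}(\mu_1,\dots,\mu_r)$ the appreciable singular values); it is well-defined independent of the chosen SVD. A matrix $X$ satisfying (1e),(2),(3),(4) is called the genuine Moore–Penrose inverse (GMPI) of $A$, denoted $A^G$. *)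

(* Defs.v *)
From HB Require Import structures.
From mathcomp Require Import all_boot all_order all_algebra.
Set Implicit Arguments. Unset Strict Implicit. Unset Printing Implicit Defensive.
Import Order.TTheory GRing.Theory Num.Theory.
Local Open Scope ring_scope.

(* The complex field is modelled by an arbitrary numClosedFieldType C
   (e.g. algC, or R[i] for a real closed / real field R). *)

Definition ctr (C : numClosedFieldType) m n (A : 'M[C]_(m, n)) : 'M[C]_(n, m) :=
  map_mx Num.conj (trmx A).

(* A dual complex matrix A = A_s + A_d eps is the pair (A_s, A_d). *)
Definition dmx (C : numClosedFieldType) m n := ('M[C]_(m, n) * 'M[C]_(m, n))%type.

Definition dmul (C : numClosedFieldType) m n p (A : dmx C m n) (B : dmx C n p)
  : dmx C m p := (A.1 *m B.1, A.1 *m B.2 + A.2 *m B.1).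

Definition dstar (C : numClosedFieldType) m n (A : dmx C m n) : dmx C n m :=
  (ctr A.1, ctr A.2).

Definition did (C : numClosedFieldType) n : dmx C n n := (1%:M, 0).

Definition dunitary (C : numClosedFieldType) n (U : dmx C n n) : Prop :=
  dmul (dstar U) U = did C n /\ dmul U (dstar U) = did C n.

Definition dreal (C : numClosedFieldType) (a : C * C) : Prop :=
  a.1 \is Num.real /\ a.2 \is Num.real.
Definition dle (C : numClosedFieldType) (a b : C * C) : Prop :=
  a.1 < b.1 \/ (a.1 = b.1 /\ a.2 <= b.2).

(* mu : nat -> C * C lists the dual singular values mu_1 .. mu_t (index 0-based). *)
Definition is_svd_data (C : numClosedFieldType) m n (r t : nat) (mu : nat -> C * C)
  : Prop :=
  [/\ (r <= t <= minn m n)%N,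
      (forall i, (i < r)%N -> dreal (mu i) /\ 0 < (mu i).1),
      (forall i, (r <= i)%N -> (i < t)%N -> (mu i).1 = 0 /\ (mu i).2 \is Num.real /\ 0 < (mu i).2),
      (forall i, (i.+1 < r)%N -> dle (mu i.+1) (mu i))
    & (forall i, (r <= i)%N -> (i.+1 < t)%N -> dle (mu i.+1) (mu i))].

Definition Sigma (C : numClosedFieldType) m n (r t : nat) (mu : nat -> C * C)
  : dmx C m n :=
  (\matrix_(i < m, j < n) if ((i : nat) == j) && (i < r)%N then (mu i).1 else 0,
   \matrix_(i < m, j < n) if ((i : nat) == j) && (i < t)%N then (mu i).2 else 0).

Definition Sigma_e (C : numClosedFieldType) m n (r : nat) (mu : nat -> C * C)
  : dmx C m n :=
  (\matrix_(i < m, j < n) if ((i : nat) == j) && (i < r)%N then (mu i).1 else 0,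
   \matrix_(i < m, j < n) if ((i : nat) == j) && (i < r)%N then (mu i).2 else 0).

Definition SigmaG (C : numClosedFieldType) m n (r : nat) (mu : nat -> C * C)
  : dmx C n m :=
  (\matrix_(i < n, j < m) if ((i : nat) == j) && (i < r)%N then ((mu i).1)^-1 else 0,
   \matrix_(i < n, j < m) if ((i : nat) == j) && (i < r)%N
                          then - (((mu i).1)^-2 * (mu i).2) else 0).

Definition essential (C : numClosedFieldType) m n (U : dmx C m m) (V : dmx C n n)
  (r : nat) (mu : nat -> C * C) : dmx C m n :=
  dmul (dmul U (Sigma_e m n r mu)) (dstar V).

Definition AG (C : numClosedFieldType) m n (U : dmx C m m) (V : dmx C n n)
  (r : nat) (mu : nat -> C * C) : dmx C n m :=
  dmul (dmul V (SigmaG m n r mu)) (dstar U).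

Definition gmpi_conds (C : numClosedFieldType) m n (A Ae : dmx C m n) (X : dmx C n m)
  : Prop :=
  [/\ dmul (dmul A X) A = Ae,
      dmul (dmul X A) X = X,
      dstar (dmul A X) = dmul A X
    & dstar (dmul X A) = dmul X A].

(* The Penrose conditions for a complex matrix: X = A^+ iff these hold
   (the Moore-Penrose inverse is the unique such X). *)
Definition is_MP (C : numClosedFieldType) m n (A : 'M[C]_(m, n)) (X : 'M[C]_(n, m))
  : Prop :=
  [/\ A *m X *m A = A, X *m A *m X = X,
      ctr (A *m X) = A *m X & ctr (X *m A) = X *m A].

(* Main.v *)
Require Import Defs.
From HB Require Import structures.
From mathcomp Require Import all_boot all_order all_algebra.
Set Implicit Arguments. Unset Strict Implicit. Unset Printing Implicit Defensive.
Import Order.TTheory GRing.Theory Num.Theory.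
From mathcomp Require Import ring.
Local Open Scope ring_scope.

Section DualAlg.
Variable C : numClosedFieldType.

Lemma ctrM m n p (A : 'M[C]_(m, n)) (B : 'M[C]_(n, p)) :
  ctr (A *m B) = ctr B *m ctr A.
Proof. by rewrite /ctr trmx_mul map_mxM. Qed.

Lemma ctrD m n (A B : 'M[C]_(m, n)) : ctr (A + B) = ctr A + ctr B.
Proof. by rewrite /ctr linearD /= map_mxD. Qed.

Lemma ctrK m n (A : 'M[C]_(m, n)) : ctr (ctr A) = A.
Proof. by apply/matrixP=> i j; rewrite !mxE conjCK. Qed.

Lemma ctr0 m n : ctr (0 : 'M[C]_(m, n)) = 0.
Proof. by apply/matrixP=> i j; rewrite !mxE rmorph0. Qed.

Lemma ctr1 n : ctr (1%:M : 'M[C]_n) = 1%:M.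
Proof. by rewrite /ctr trmx1 map_mx1. Qed.

Lemma ctrN m n (A : 'M[C]_(m, n)) : ctr (- A) = - ctr A.
Proof. by apply/matrixP=> i j; rewrite !mxE rmorphN. Qed.

Lemma dmulA m n p q (A : dmx C m n) (B : dmx C n p) (D : dmx C p q) :
  dmul (dmul A B) D = dmul A (dmul B D).
Proof.
case: A B D => [A1 A2] [B1 B2] [D1 D2]; rewrite /dmul /=.
by congr pair; rewrite ?mulmxA // !mulmxDl !mulmxDr !mulmxA addrA.
Qed.

Lemma dmul1l m n (A : dmx C m n) : dmul (did C m) A = A.
Proof. by case: A => a b; rewrite /dmul /= !mul1mx mul0mx addr0. Qed.

Lemma dmul1r m n (A : dmx C m n) : dmul A (did C n) = A.
Proof. by case: A => a b; rewrite /dmul /= !mulmx1 mulmx0 add0r. Qed.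

Lemma dstarM m n p (A : dmx C m n) (B : dmx C n p) :
  dstar (dmul A B) = dmul (dstar B) (dstar A).
Proof. by rewrite /dstar /dmul /= !ctrM ctrD !ctrM addrC. Qed.

Lemma dstarK m n (A : dmx C m n) : dstar (dstar A) = A.
Proof. by case: A => a b; rewrite /dstar /= !ctrK. Qed.

Lemma dunitary_star n (U : dmx C n n) : dunitary U -> dunitary (dstar U).
Proof. by case=> h1 h2; split; rewrite dstarK. Qed.

Lemma UL n (U : dmx C n n) p (Z : dmx C n p) : dunitary U -> dmul (dstar U) (dmul U Z) = Z.
Proof. by case=> h1 _; rewrite -dmulA h1 dmul1l. Qed.

Lemma UR n (U : dmx C n n) p (Z : dmx C n p) : dunitary U -> dmul U (dmul (dstar U) Z) = Z.
Proof. by case=> _ h2; rewrite -dmulA h2 dmul1l. Qed.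

Lemma transfer m n (A Ae : dmx C m n) (X : dmx C n m) (U : dmx C m m) (V : dmx C n n) :
  dunitary U -> dunitary V -> gmpi_conds A Ae X ->
  gmpi_conds (dmul (dmul U A) (dstar V)) (dmul (dmul U Ae) (dstar V))
             (dmul (dmul V X) (dstar U)).
Proof.
move=> hU hV [c1 c2 c3 c4]; split.
- by rewrite !dmulA (UL _ hV) (UL _ hU) -c1 !dmulA.
- by rewrite !dmulA (UL _ hU) (UL _ hV); congr (dmul V _); rewrite -!dmulA c2.
- rewrite !dmulA (UL _ hV) -(dmulA A X) -{2}c3.
  by rewrite !dstarM !dstarK !dmulA.
- rewrite !dmulA (UL _ hU) -(dmulA X A) -{2}c4.
  by rewrite !dstarM !dstarK !dmulA.
Qed.
End DualAlg.
Section M.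
Variable C : numClosedFieldType.
Lemma MP_unique m n (S : 'M[C]_(m, n)) (G Y : 'M[C]_(n, m)) :
  S *m G *m S = S -> G *m S *m G = G -> ctr (S *m G) = S *m G -> ctr (G *m S) = G *m S ->
  S *m Y *m S = S -> Y *m S *m Y = Y -> ctr (S *m Y) = S *m Y -> ctr (Y *m S) = Y *m S ->
  Y = G.
Proof.
move=> g1 g2 g3 g4 y1 y2 y3 y4.
have cS1 : ctr S = ctr S *m (S *m G) by rewrite -{1}g1 ctrM g3.
have cS2 : ctr S = (Y *m S) *m ctr S by rewrite -{1}y1 -mulmxA ctrM y4.
have e1 : Y = Y *m S *m G.
  rewrite -{1}y2 -mulmxA -{1}y3 ctrM cS1 !mulmxA -(mulmxA Y (ctr Y) (ctr S)) -ctrM y3.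
  by rewrite mulmxA y2.
have e2 : G = Y *m S *m G.
  rewrite -{1}g2 -{1}g4 ctrM cS2 -(mulmxA (Y *m S) (ctr S) (ctr G)) -ctrM g4.
  by rewrite -(mulmxA (Y *m S) (G *m S) G) g2.
by rewrite e1 -e2.
Qed.

Lemma W_unique m n (S D : 'M[C]_(m, n)) (G W : 'M[C]_(n, m)) :
  S *m G *m S = S -> G *m S *m G = G -> ctr (S *m G) = S *m G -> ctr (G *m S) = G *m S ->
  G *m S *m W + (G *m D + W *m S) *m G = W ->
  ctr (S *m W) = S *m W -> ctr (W *m S) = W *m S ->
  W = - (G *m D *m G).
Proof.
move=> g1 g2 g3 g4 b c d.
set T := G *m S *m W *m S *m G.
have cS1 : ctr S = ctr S *m (S *m G) by rewrite -{1}g1 ctrM g3.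
have cS2 : ctr S = (G *m S) *m ctr S by rewrite -{1}g1 -mulmxA ctrM g4.
have t1 : G *m S *m W = T.
  rewrite -mulmxA -c ctrM cS1 !mulmxA -(mulmxA G (ctr W) (ctr S)) -ctrM c.
  by rewrite /T !mulmxA.
have t2 : W *m S *m G = T.
  rewrite -d ctrM cS2 -(mulmxA (G *m S) (ctr S) (ctr W)) -ctrM d.
  by rewrite /T !mulmxA.
have hW : W = T + T + G *m D *m G.
  by rewrite -{1}b mulmxDl t1 t2 [G *m D *m G + T]addrC addrA.
have g2' : forall p (X : 'M[C]_(m, p)), G *m S *m G *m X = G *m X.
  by move=> p X; rewrite g2.
have hT : T = T + T + G *m D *m G.
  have g2r : forall p (X : 'M[C]_(p, n)), X *m G *m S *m G = X *m G.
    by move=> p X; rewrite -!mulmxA (mulmxA G S G) g2.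
  have eT : G *m S *m T *m S *m G = T.
    by rewrite /T !mulmxA g2 g2r.
  have eG : G *m S *m (G *m D *m G) *m S *m G = G *m D *m G.
    by rewrite !mulmxA g2 g2r.
  by rewrite {1}/T {1}hW !(mulmxDl, mulmxDr) eT eG.
have : T + G *m D *m G = 0.
  by apply: (addrI T); rewrite addr0 addrA -hT.
move/eqP; rewrite addr_eq0 => /eqP hT2.
by rewrite hW hT2 -addrA addNr addr0.
Qed.
End M.
Section DG.
Variable C : numClosedFieldType.
Definition dg m n (f : nat -> C) : 'M[C]_(m, n) :=
  \matrix_(i < m, j < n) if (i : nat) == j then f i else 0.

Lemma dgM m n p f g : dg m n f *m dg n p g = dg m p (fun i => if (i < n)%N then f i * g i else 0).
Proof.
apply/matrixP=> i j; rewrite !mxE.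
case: (ltnP i n) => hi.
- rewrite (bigD1 (Ordinal hi)) //= !mxE eqxx big1 ?addr0.
    by case: eqP => _; rewrite ?mulr0.
  move=> k hk; rewrite !mxE; case: eqP => [e|_]; last by rewrite mul0r.
  by move: hk; rewrite -val_eqE /= -e eqxx.
- rewrite big1; first by case: eqP.
  move=> k _; rewrite !mxE gtn_eqF ?mul0r //.
  exact: leq_trans (ltn_ord k) hi.
Qed.

Lemma dgD m n f g : dg m n f + dg m n g = dg m n (fun i => f i + g i).
Proof. by apply/matrixP=> i j; rewrite !mxE; case: eqP; rewrite ?addr0. Qed.

Lemma dgN m n f : - dg m n f = dg m n (fun i => - f i).
Proof. by apply/matrixP=> i j; rewrite !mxE; case: eqP; rewrite ?oppr0. Qed.

Lemma ctr_dg m n f : ctr (dg m n f) = dg n m (fun i => (f i)^*).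
Proof.
apply/matrixP=> i j; rewrite !mxE eq_sym; case: eqP => [e|_]; last by rewrite rmorph0.
by rewrite e.
Qed.

Lemma eq_dg m n f g : (forall i, (i < m)%N -> (i < n)%N -> f i = g i) -> dg m n f = dg m n g.
Proof.
move=> h; apply/matrixP=> i j; rewrite !mxE; case: eqP => // e.
by rewrite h // e.
Qed.

Lemma dg0 m n : dg m n (fun _ => 0) = 0.
Proof. by apply/matrixP=> i j; rewrite !mxE; case: eqP. Qed.
End DG.

Section Sig.
Variable C : numClosedFieldType.
Variables (m n r t : nat) (mu : nat -> C * C).
Hypothesis H : is_svd_data m n r t mu.

Let Hrt : (r <= t)%N. Proof. by case: H => /andP[]. Qed.
Let Htmn : (t <= minn m n)%N. Proof. by case: H => /andP[]. Qed.
Let Hrm : (r <= m)%N. Proof. by apply: leq_trans Hrt (leq_trans Htmn (geq_minl _ _)). Qed.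
Let Hrn : (r <= n)%N. Proof. by apply: leq_trans Hrt (leq_trans Htmn (geq_minr _ _)). Qed.
Let nz i : (i < r)%N -> (mu i).1 != 0.
Proof. by case: H => _ h _ _ _ hi; have [_ /lt0r_neq0] := h i hi. Qed.
Let cr1 i : (i < r)%N -> ((mu i).1)^* = (mu i).1.
Proof. by case: H => _ h _ _ _ hi; have [[/conj_Creal]] := h i hi. Qed.
Let cr2 i : (i < r)%N -> ((mu i).2)^* = (mu i).2.
Proof. by case: H => _ h _ _ _ hi; have [[_ /conj_Creal]] := h i hi. Qed.

Lemma cM (x y : C) : (x * y)^* = x^* * y^*. Proof. exact: rmorphM. Qed.
Lemma cN (x : C) : (- x)^* = - x^*. Proof. exact: rmorphN. Qed.
Lemma cV (x : C) : (x^-1)^* = (x^*)^-1. Proof. exact: fmorphV. Qed.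
Lemma c1 : (1 : C)^* = 1. Proof. exact: rmorph1. Qed.
Lemma c0 : (0 : C)^* = 0. Proof. exact: rmorph0. Qed.

Definition sS i := if (i < r)%N then (mu i).1 else 0.
Definition sD i := if (i < t)%N then (mu i).2 else 0.
Definition sDe i := if (i < r)%N then (mu i).2 else 0.
Definition sG i := if (i < r)%N then ((mu i).1)^-1 else 0.
Definition sG2 i := if (i < r)%N then - (((mu i).1)^-2 * (mu i).2) else 0.

Lemma SigmaE : Sigma m n r t mu = (dg m n sS, dg m n sD).
Proof. by congr pair; apply/matrixP=> i j; rewrite !mxE /sS /sD; case: eqP. Qed.
Lemma SigmaeE : Sigma_e m n r mu = (dg m n sS, dg m n sDe).
Proof. by congr pair; apply/matrixP=> i j; rewrite !mxE /sS /sDe; case: eqP. Qed.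
Lemma SigmaGE : SigmaG m n r mu = (dg n m sG, dg n m sG2).
Proof. by congr pair; apply/matrixP=> i j; rewrite !mxE /sG /sG2; case: eqP. Qed.

Definition mS := dg m n sS.
Definition mD := dg m n sD.
Definition mG := dg n m sG.
Definition mG2 := dg n m sG2.
Local Notation S := mS.
Local Notation D := mD.
Local Notation G := mG.
Local Notation G2 := mG2.

Ltac pw i :=
  let hr := fresh "hr" in let hr2 := fresh "hr" in
  case: (ltnP i r) => hr;
  [ rewrite ?hr ?(leq_trans hr Hrm) ?(leq_trans hr Hrn) ?(leq_trans hr Hrt) /=
      ?(cM, cN, cV, c1, c0, cr1 hr, cr2 hr)
  | have hr2 : (i < r)%N = false; [by rewrite ltnNge hr|];
    rewrite ?hr2 /=; do ?[rewrite mul0r | rewrite mulr0 | rewrite addr0 | rewrite add0r | rewrite oppr0 | rewrite rmorph0 | rewrite if_same] ].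

Ltac sdg := rewrite /mS /mD /mG /mG2 /sS /sD /sDe /sG /sG2 ?(dgM, dgD, dgN, ctr_dg);
  apply: eq_dg; let i := fresh "i" in intros i ? ?; simpl; pw i.

Ltac fin := try done; try (by field; apply: nz).


Lemma f1 : S *m G *m S = S.
Proof. sdg; fin. Qed.
Lemma f2 : G *m S *m G = G.
Proof. sdg; fin. Qed.
Lemma f3 : ctr (S *m G) = S *m G.
Proof. sdg; fin. Qed.
Lemma f4 : ctr (G *m S) = G *m S.
Proof. sdg; fin. Qed.
Lemma fDG : ctr (D *m G) = D *m G.
Proof. sdg; fin. Qed.
Lemma fGD : ctr (G *m D) = G *m D.
Proof. sdg; fin. Qed.
Lemma fGDG : - (G *m D *m G) = G2.
Proof. sdg; fin. Qed.
Lemma e1 : S *m G *m D + (S *m G2 + D *m G) *m S = dg m n sDe.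
Proof. sdg; fin. Qed.
Lemma e2 : G *m S *m G2 + (G *m D + G2 *m S) *m G = G2.
Proof. sdg; fin. Qed.
Lemma e3 : ctr (S *m G2 + D *m G) = S *m G2 + D *m G.
Proof. rewrite ctrD; sdg; fin. Qed.
Lemma e4 : ctr (G *m D + G2 *m S) = G *m D + G2 *m S.
Proof. rewrite ctrD; sdg; fin. Qed.

Lemma sig_conds : gmpi_conds (Sigma m n r t mu) (Sigma_e m n r mu) (SigmaG m n r mu).
Proof.
rewrite SigmaE SigmaeE SigmaGE; split; rewrite /dmul /dstar /=; congr pair.
- exact: f1.
- exact: e1.
- exact: f2.
- exact: e2.
- exact: f3.
- exact: e3.
- exact: f4.
- exact: e4.
Qed.

Lemma sig_unique (Y : dmx C n m) :
  gmpi_conds (Sigma m n r t mu) (Sigma_e m n r mu) Y -> Y = SigmaG m n r mu.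
Proof.
rewrite SigmaE SigmaeE SigmaGE; case: Y => Y1 W [c1 c2 c3 c4].
rewrite /dmul /dstar /= in c1 c2 c3 c4.
case: c1 => c1a _; case: c2 => c2a c2b; case: c3 => c3a c3b; case: c4 => c4a c4b.
have hY : Y1 = G := MP_unique f1 f2 f3 f4 c1a c2a c3a c4a.
subst Y1.
rewrite ctrD fDG in c3b; rewrite ctrD fGD in c4b.
have c : ctr (S *m W) = S *m W by apply: (addIr _ c3b).
have d : ctr (W *m S) = W *m S by apply: (addrI _ c4b).
have := W_unique f1 f2 f3 f4 c2b c d.
by rewrite fGDG => ->.
Qed.

Lemma row_zero p q (M : 'M[C]_(n, q)) (i : 'I_p) j : sS i = 0 -> (dg p n sS *m M) i j = 0.
Proof.
move=> h; rewrite mxE big1 // => k _; rewrite mxE.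
by case: eqP => _; rewrite ?h mul0r.
Qed.

Lemma col_zero p (M : 'M[C]_(p, m)) i (j : 'I_n) : sS j = 0 -> (M *m dg m n sS) i j = 0.
Proof.
move=> h; rewrite mxE big1 // => k _; rewrite mxE.
by case: eqP => [->|_]; rewrite ?h mulr0.
Qed.

End Sig.

Lemma complex_conds (C : numClosedFieldType) m n (a : 'M[C]_(m, n)) (x : 'M[C]_(n, m)) :
  is_MP a x -> gmpi_conds (a, 0) (a, 0) (x, 0).
Proof.
case=> m1 m2 m3 m4; split; rewrite /dmul /dstar /=; congr pair;
  rewrite ?(mulmx0, mul0mx, addr0, add0r, ctr0) //.
Qed.

Theorem theorem4p1 (C : numClosedFieldType) (m n : nat) (A : dmx C m n)
  (U : dmx C m m) (V : dmx C n n) (r t : nat) (mu : nat -> C * C) :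
  is_svd_data m n r t mu ->
  dunitary U -> dunitary V ->
  A = dmul (dmul U (Sigma m n r t mu)) (dstar V) ->
  [/\ gmpi_conds A (essential U V r mu) (AG U V r mu),
      (forall X : dmx C n m, gmpi_conds A (essential U V r mu) X -> X = AG U V r mu)
    & (A.2 = 0 -> (AG U V r mu).2 = 0 /\ is_MP A.1 (AG U V r mu).1)].
Proof.
move=> H hU hV hA.
have ex : gmpi_conds A (essential U V r mu) (AG U V r mu).
  by rewrite hA /essential /AG; apply: transfer => //; apply: sig_conds.
have hS : dmul (dmul (dstar U) A) V = Sigma m n r t mu.
  by rewrite hA !dmulA (UL _ hU) (proj1 hV) dmul1r.
have uq : forall X : dmx C n m, gmpi_conds A (essential U V r mu) X -> X = AG U V r mu.
  move=> X hX.
  have hY := transfer (dunitary_star hU) (dunitary_star hV) hX.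
  rewrite dstarK hS /essential !dmulA (UL _ hU) (proj1 hV) dmul1r in hY.
  have := sig_unique H hY; rewrite /AG => <-.
  by rewrite !dmulA (UR _ hV) dstarK (proj2 hU) dmul1r.
split => // hA2.
(* t = r *)
have [/andP [Hrt Htmn] _ Hinf _ _] := H.
have noinf : forall i, (r <= i)%N -> (i < t)%N -> False.
  move=> i hri hit.
  have him : (i < m)%N by apply: leq_trans hit (leq_trans Htmn (geq_minl _ _)).
  have hin : (i < n)%N by apply: leq_trans hit (leq_trans Htmn (geq_minr _ _)).
  have [_ [_ hpos]] := Hinf i hri hit.
  have e := congr1 (fun M : dmx C m n => M.2 (Ordinal him) (Ordinal hin)) hS.
  move: e; rewrite /= mxE eqxx /= hit.
  have hA1 : A.1 = U.1 *m (Sigma m n r t mu).1 *m ctr V.1 by rewrite hA.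
  have uU1 : ctr U.1 *m U.1 = 1%:M by have /= := congr1 fst (proj1 hU).
  have uV1 : ctr V.1 *m V.1 = 1%:M by have /= := congr1 fst (proj1 hV).
  rewrite hA2 mulmx0 add0r hA1 !mulmxA uU1 mul1mx -!mulmxA uV1 mulmx1 (mulmxA (ctr U.2)).
  rewrite SigmaE /=.
  have hsi : sS r mu i = 0 by rewrite /sS ltnNge hri.
  have -> : forall (P Q : 'M[C]_(m,n)) a b, (P + Q) a b = P a b + Q a b by move=> *; rewrite mxE.
  rewrite row_zero; last exact: hsi.
  rewrite col_zero; last exact: hsi.
  rewrite addr0 => e.
  by rewrite -e ltxx in hpos.
have tr : forall i, (i < t)%N = (i < r)%N.
  move=> i; case: (ltnP i r) => h; first by rewrite (leq_trans h Hrt).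
  by apply/negbTE/negP => ht; apply: (noinf i h ht).
have eAe : essential U V r mu = A.
  rewrite hA /essential; congr (dmul (dmul U _) _).
  by rewrite /Sigma_e /Sigma; congr pair; apply/matrixP=> a b; rewrite !mxE tr.
rewrite eAe in ex uq.
move: ex uq; set X := AG U V r mu => ex uq.
case: ex => c1 c2 c3 c4.
have MP : is_MP A.1 X.1.
  by split; [ have /= := congr1 fst c1 | have /= := congr1 fst c2
            | have /= := congr1 fst c3 | have /= := congr1 fst c4 ].
split => //.
have eA : A = (A.1, 0) by move: hA2; case: (A) => a b /= ->.
have X0 := complex_conds MP; rewrite -eA in X0.
by rewrite -(uq _ X0).
Qed.
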